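(* Let $M$ be a $po$-$\Gamma$-semigroup. The following are equivalent: (1) $M$ is strongly regular. (2) $M$ is left regular, right regular, and for every $a\in M$ the set $(M\Gamma a\Gamma M]$ is a strongly regular sub-$\Gamma$-semigroup of $M$. (3) For every $a\in M$, $a\in (M\Gamma a]\cap (a\Gamma M]$ and $(M\Gamma a\Gamma M]$ is a strongly regular sub-$\Gamma$-semigroup of $M$.
   Context: A $po$-$\Gamma$-semigroup is a triple $(M,\Gamma,\le)$ where $M,\Gamma$ are nonempty sets with a map $M\times\Gamma\times M\to M$, $(a,\gamma,b)\mapsto a\gamma b$, satisfying $(a\gamma b)\mu c=a\gamma(b\mu c)$ for all $a,b,c\in M$, $\gamma,\mu\in\Gamma$, and $\le$ is a partial order on $M$ such that $a\le b$ implies $a\gamma c\le b\gamma c$ and $c\gamma a\le c\gamma b$ for all $c\in M$, $\gamma\in\Gamma$. For $A,B\subseteq M$, $A\Gamma B=\{a\gamma b: a\in A,\gamma\in\Gamma,b\in B\}$ (with $a\Gamma B$ meaning $\{a\}\Gamma B$, etc.), and $(A]=\{t\in M: t\le a \text{ for some } a\in A\}$. $M$ is left regular if $a\in(M\Gamma a\Gamma a]$ for all $a\in M$; right regular if $a\in(a\Gamma a\Gamma M]$ for all $a\in M$. A nonempty subset $T\subseteq M$ is a sub-$\Gamma$-semigroup if $T\Gamma T\subseteq T$; it is then a $po$-$\Gamma$-semigroup with the restricted operation and order. A $po$-$\Gamma$-semigroup $T$ is strongly regular if for every $a\in T$ there exist $x\in T$ and $\gamma,\mu\in\Gamma$ such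 that $a\le a\gamma x\mu a$ and $a\gamma x=x\gamma a=x\mu a=a\mu x$. *)

(* Defs.v *)
From Stdlib Require Import Classical.

Set Implicit Arguments.

Record poGammaSemigroup (M G : Type) := {
  op : M -> G -> M -> M;
  le : M -> M -> Prop;
  op_assoc : forall (a b c : M) (g m : G), op (op a g b) m c = op a g (op b m c);
  le_refl : forall a, le a a;
  le_antisym : forall a b, le a b -> le b a -> a = b;
  le_trans : forall a b c, le a b -> le b c -> le a c;
  le_compat_r : forall a b c g, le a b -> le (op a g c) (op b g c);
  le_compat_l : forall a b c g, le a b -> le (op c g a) (op c g b);
  M_nonempty : exists x : M, True;
  G_nonempty : exists g : G, True
}.

Section Defs.
Context {M G : Type} (S : poGammaSemigroup M G).

Local Notation "a ∘[ g ] b" := (op S a g b) (at level 40, left associativity).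

Definition GProd (A B : M -> Prop) : M -> Prop :=
  fun t => exists a g b, A a /\ B b /\ t = a ∘[g] b.

Definition down (A : M -> Prop) : M -> Prop :=
  fun t => exists a, A a /\ le S t a.

Definition single (a : M) : M -> Prop := fun t => t = a.
Definition full : M -> Prop := fun _ => True.

Definition left_regular : Prop :=
  forall a, down (GProd (GProd full (single a)) (single a)) a.

Definition right_regular : Prop :=
  forall a, down (GProd (GProd (single a) (single a)) full) a.

Definition sub_gamma_semigroup (T : M -> Prop) : Prop :=
  (exists t, T t) /\ forall a g b, T a -> T b -> T (a ∘[g] b).

Definition strongly_regular_on (T : M -> Prop) : Prop :=
  forall a, T a -> exists x g m, T x /\
    le S a (a ∘[g] x ∘[m] a) /\
    a ∘[g] x = x ∘[g] a /\ x ∘[g] a = x ∘[m] a /\ x ∘[m] a = a ∘[m] x.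

Definition strongly_regular : Prop := strongly_regular_on full.

Definition MaM (a : M) : M -> Prop :=
  down (GProd (GProd full (single a)) full).

End Defs.

Definition cond2 {M G} (S : poGammaSemigroup M G) : Prop :=
  left_regular S /\ right_regular S /\
  (forall a, sub_gamma_semigroup S (MaM S a) /\ strongly_regular_on S (MaM S a)).

Definition cond3 {M G} (S : poGammaSemigroup M G) : Prop :=
  forall a, (down S (GProd S full (single a)) a /\ down S (GProd S (single a) full) a) /\
            sub_gamma_semigroup S (MaM S a) /\ strongly_regular_on S (MaM S a).

(* Main.v *)
Require Import Defs.
From Stdlib Require Import Classical.

Section Pf.
Context {M G : Type} (S : poGammaSemigroup M G).
Local Notation "a ∘[ g ] b" := (op S a g b) (at level 40, left associativity).
Local Notation le := (le S).

Lemma in_MaM a u g v m : le a (u ∘[g] a) -> le a (a ∘[m] v) -> MaM S a a.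
Proof.
  intros H1 H2. exists ((u ∘[g] a) ∘[m] v). split.
  - exists (u ∘[g] a), m, v. split; [exists u, g, a; repeat split; reflexivity|].
    split; [exact I|reflexivity].
  - apply le_trans with (u ∘[g] a); auto.
    rewrite op_assoc. apply le_compat_l; auto.
Qed.

Lemma MaM_r a t h z : MaM S a t -> MaM S a (t ∘[h] z).
Proof.
  intros [w [[a0 [g [b [[u [g' [b' [_ [Hb' E0]]]]] [_ E]]]]] Hle]].
  unfold single in Hb'. subst.
  exists ((u ∘[g'] a) ∘[g] (b ∘[h] z)). split.
  - exists (u ∘[g'] a), g, (b ∘[h] z). split; [exists u, g', a; repeat split; reflexivity|].
    split; [exact I|reflexivity].
  - rewrite <- op_assoc. apply le_compat_r; auto.
Qed.

Lemma MaM_l a t h z : MaM S a t -> MaM S a (z ∘[h] t).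
Proof.
  intros [w [[a0 [g [b [[u [g' [b' [_ [Hb' E0]]]]] [_ E]]]]] Hle]].
  unfold single in Hb'. subst.
  exists (((z ∘[h] u) ∘[g'] a) ∘[g] b). split.
  - exists ((z ∘[h] u) ∘[g'] a), g, b. split; [exists (z ∘[h] u), g', a; repeat split; reflexivity|].
    split; [exact I|reflexivity].
  - rewrite !op_assoc. apply le_compat_l. rewrite <- op_assoc. auto.
Qed.

Lemma sub_MaM a : (exists t, MaM S a t) -> sub_gamma_semigroup S (MaM S a).
Proof. intros H; split; auto. intros. apply MaM_r; auto. Qed.

Lemma sr_MaM a : strongly_regular S -> strongly_regular_on S (MaM S a).
Proof.
  intros SR t Ht. destruct (SR t I) as [x [g [m [_ [Hle [E1 [E2 E3]]]]]]].
  assert (Emt : x ∘[m] t = t ∘[g] x) by congruence.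
  assert (Egt : x ∘[g] t = t ∘[g] x) by congruence.
  assert (Etm : t ∘[m] x = t ∘[g] x) by congruence.
  assert (Eem : (t ∘[g] x) ∘[m] (t ∘[g] x) = (t ∘[g] x) ∘[g] (t ∘[g] x)).
  { rewrite op_assoc, <- (op_assoc S x t x m g), Emt, <- Egt, op_assoc, Egt.
    rewrite <- op_assoc. reflexivity. }
  assert (Ey : x ∘[m] (t ∘[g] x) = (t ∘[g] x) ∘[g] x).
  { rewrite <- op_assoc, Emt. reflexivity. }
  exists (x ∘[m] (t ∘[g] x)), g, m. split; [|split; [|split; [|split]]].
  - apply MaM_l. apply MaM_r. auto.
  - rewrite <- op_assoc, op_assoc. apply le_trans with (t ∘[g] x ∘[m] t); auto.
    apply le_compat_l. auto.
  - rewrite <- op_assoc, Eem, Ey, (op_assoc S (t ∘[g] x) x t), Egt. reflexivity.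
  - rewrite Ey, (op_assoc S (t ∘[g] x) x t), (op_assoc S (t ∘[g] x) x t), Egt, Emt. reflexivity.
  - rewrite Ey, (op_assoc S (t ∘[g] x) x t), Emt, <- Eem, <- Ey, <- (op_assoc S t x (t ∘[g] x) m m), Etm. reflexivity.
Qed.
End Pf.

Theorem theorem9 (M G : Type) (S : poGammaSemigroup M G) :
  (strongly_regular S <-> cond2 S) /\ (cond2 S <-> cond3 S).
Proof.
  assert (H12 : strongly_regular S -> cond2 S).
  { intros SR. split; [|split].
    - intros a. destruct (SR a I) as [x [g [m [_ [Hle [E1 _]]]]]].
      exists (op S (op S x g a) m a). split; [|rewrite <- E1; auto].
      exists (op S x g a), m, a. split; [exists x, g, a; repeat split; reflexivity|].
      split; reflexivity.
    - intros a. destruct (SR a I) as [x [g [m [_ [Hle [E1 [E2 E3]]]]]]].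
      exists (op S (op S a g a) m x). split.
      + exists (op S a g a), m, x. split; [exists a, g, a; repeat split; reflexivity|].
        split; [exact I|reflexivity].
      + rewrite op_assoc, <- E3, <- op_assoc. auto.
    - intros a. split; [|apply sr_MaM; auto].
      apply sub_MaM. exists a.
      destruct (SR a I) as [x [g [m [_ [Hle _]]]]].
      apply (in_MaM S a (op S a g x) m (op S x m a) g); auto.
      rewrite <- op_assoc; auto. }
  assert (H23 : cond2 S -> cond3 S).
  { intros [LR [RR H]] a. split; [|apply H]. split.
    - destruct (LR a) as [w [[b [g [c [[u [g' [b' [_ [Hb' E0]]]]] [Hc E]]]]] Hle]].
      unfold single in *. subst.
      exists (op S (op S u g' a) g a). split; auto.
      exists (op S u g' a), g, a. repeat split; reflexivity.
    - destruct (RR a) as [w [[b [g [c [[u [g' [b' [Hu [Hb' E0]]]]] [Hc E]]]]] Hle]].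
      unfold single in *. subst.
      exists (op S a g' (op S a g c)). split.
      + exists a, g', (op S a g c). repeat split; reflexivity.
      + rewrite <- op_assoc; auto. }
  assert (H31 : cond3 S -> strongly_regular S).
  { intros H3 a _. destruct (H3 a) as [[[w1 [[u [g [b [_ [Hb E]]]]] H1]] [w2 [[b' [m [v [Hb' [_ E']]]]] H2]]] [_ SRa]].
    unfold single in *. subst.
    assert (Ha : MaM S a a) by (apply (in_MaM S a u g v m); auto).
    destruct (SRa a Ha) as [x [g1 [m1 [_ P]]]]. exists x, g1, m1. split; [exact I|exact P]. }
  tauto.
Qed.
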